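(* Let $X\subseteq\{0,1\}^n$, $f:X\to\{0,1\}$, $c>0$, and let $\{\ket{v_{x,i}}\in\mathbb{R}^m\}_{x\in X,i\in[n]}$ be a real $f$-deciding vector set of size $A$. Let $\ket{\psi_x}$ ($f(x)=1$), $\ket{\phi_x}$ ($f(x)=0$), $\kappa$, $\{\ket{\zeta_j}\}_{j\in[\kappa]}$, $\alpha_{j,x}$, the set $V$, $\varepsilon$, $S$, and the compressed vectors $\ket{\psi_x'},\ket{\phi_x'},\ket{\zeta_j'}$ be as described in the context. Then: (1) for all $j,l\in[\kappa]$, $|\braket{\zeta_j'}{\zeta_l'}-\delta_{j,l}|\le 4\varepsilon$; (2) for all $j\in[\kappa]$ and $x\in f^{-1}(0)$, $|\braket{\zeta_j'}{\phi_x'}|\le 2\varepsilon(c+1)A$; (3) for all $x$ with $f(x)=1$, $\big|\|\ket{\psi_x'}\|^2-1\big|\le 4\varepsilon\kappa$, and for all $x$ with $f(x)=0$, $\big|\|\ket{\phi_x'}\|-1\big|\le 3\varepsilon$.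
   Context: An $f$-deciding vector set $\{\ket{v_{x,i}}\}$ satisfies $\sum_{i:x_i\ne y_i}\braket{v_{x,i}}{v_{y,i}}=1$ for all $x,y\in X$ with $f(x)\ne f(y)$; its size is $A=\max_{x}\sum_i\|\ket{v_{x,i}}\|^2$. Let $\mathcal{H}=\mathbb{R}\oplus(\mathbb{R}^n\otimes\mathbb{R}^m\otimes\mathbb{R}^2)$ with $\ket{\hat 0}$ a unit vector spanning the first summand. For $f(x)=1$ let $\ket{\psi_x}=\frac{1}{\sqrt{\nu_x}}\big(\ket{\hat0}+\frac{1}{\sqrt{cA}}\sum_{i}\ket{i}\ket{v_{x,i}}\ket{x_i}\big)$ with $\nu_x=1+\frac{1}{cA}\sum_i\|\ket{v_{x,i}}\|^2$ (so $\|\ket{\psi_x}\|=1$); for $f(x)=0$ let $\ket{\phi_x}=\frac{1}{\sqrt{\mu_x}}\big(\ket{\hat0}-\sqrt{cA}\sum_i\ket{i}\ket{v_{x,i}}\ket{\bar x_i}\big)$ with $\mu_x=1+cA\sum_i\|\ket{v_{x,i}}\|^2$, where $\bar x_i=1-x_i$. Let $\kappa$ be the dimension of $\operatorname{span}\{\ket{\psi_x}:f(x)=1\}$, let $\{\ket{\zeta_j}\}_{j\in[\kappa]}$ be an orthonormal basis of this span, and fix real numbers $\alpha_{j,x}$ with $\ket{\zeta_j}=\sum_{x:f(x)=1}\alpha_{j,x}\ket{\psi_x}$. For $j\in[\kappa],i\in[n],b\in\{0,1\}$ let $\ket{C_{j,i,b}}=\sum_{x:f(x)=1,x_i=b}\frac{\alpha_{j,x}}{\sqrt{\nu_x}}\ket{v_{x,i}}$,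 and let $V=\{\ket{C_{j,i,b}}\}\cup\{\ket{v_{y,i}}:f(y)=0,i\in[n]\}\subset\mathbb{R}^m$. Let $\varepsilon>0$ and let $S\in\mathbb{R}^{N\times m}$ satisfy $(1-\varepsilon)\|u-v\|^2\le\|Su-Sv\|^2\le(1+\varepsilon)\|u-v\|^2$ for all $u,v\in V\cup\{0\}$ (a Johnson–Lindenstrauss compression of $V\cup\{0\}$). Let $T=\ket{\hat0}\bra{\hat0}+I_n\otimes S\otimes I_2$, mapping $\mathcal H$ to $\mathbb{R}\oplus(\mathbb{R}^n\otimes\mathbb{R}^N\otimes\mathbb{R}^2)$, and set $\ket{\psi_x'}=T\ket{\psi_x}$, $\ket{\phi_x'}=T\ket{\phi_x}$, $\ket{\zeta_j'}=T\ket{\zeta_j}$. *)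

(* Defs.v *)
From mathcomp Require Import all_boot all_order all_algebra.
Set Implicit Arguments. Unset Strict Implicit. Unset Printing Implicit Defensive.
Import Order.TTheory GRing.Theory Num.Theory.
Local Open Scope ring_scope.

(* Bit strings x in {0,1}^n, with x_i = x i (false = 0, true = 1). *)
Definition BV (n : nat) := {ffun 'I_n -> bool}.

Definition dotv (R : rcfType) (m : nat) (u w : 'cV[R]_m) : R :=
  \sum_(k < m) u k 0 * w k 0.
Definition norm2v (R : rcfType) (m : nat) (u : 'cV[R]_m) : R := dotv u u.

(* H = R (+) (R^n (x) R^m (x) R^2): a scalar (coefficient of |0^>) and, for
   each (i, b) in [n] x {0,1}, the block in R^m multiplying |i>|.>|b>. *)
Definition Hsp (R : rcfType) (n m : nat) :=
  (R^o * {ffun 'I_n * bool -> 'cV[R]_m})%type.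

Definition hdot (R : rcfType) (n m : nat) (p q : Hsp R n m) : R :=
  p.1 * q.1 + \sum_(ib : 'I_n * bool) dotv (p.2 ib) (q.2 ib).
Definition hnorm2 (R : rcfType) (n m : nat) (p : Hsp R n m) : R := hdot p p.

Definition ket0 (R : rcfType) (n m : nat) : Hsp R n m := (1 : R^o, 0).
Definition ketivb (R : rcfType) (n m : nat) (i : 'I_n) (u : 'cV[R]_m) (b : bool)
  : Hsp R n m := (0 : R^o, [ffun ib => if ib == (i, b) then u else 0]).

(* T = |0^><0^| + I_n (x) S (x) I_2 *)
Definition Tmap (R : rcfType) (n m N : nat) (S : 'M[R]_(N, m)) (p : Hsp R n m)
  : Hsp R n N := (p.1, [ffun ib => S *m p.2 ib]).

Definition sizeA (R : rcfType) (n m : nat) (X : {set BV n})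
  (v : BV n -> 'I_n -> 'cV[R]_m) : R :=
  \big[Num.max/0]_(x in X) \sum_(i < n) norm2v (v x i).

Definition deciding (R : rcfType) (n m : nat) (X : {set BV n}) (f : BV n -> bool)
  (v : BV n -> 'I_n -> 'cV[R]_m) : Prop :=
  forall x y, x \in X -> y \in X -> f x != f y ->
    \sum_(i < n | x i != y i) dotv (v x i) (v y i) = 1.

Definition nu_ (R : rcfType) (n m : nat) (c A : R) (v : BV n -> 'I_n -> 'cV[R]_m)
  (x : BV n) : R := 1 + (c * A)^-1 * \sum_(i < n) norm2v (v x i).
Definition mu_ (R : rcfType) (n m : nat) (c A : R) (v : BV n -> 'I_n -> 'cV[R]_m)
  (x : BV n) : R := 1 + (c * A) * \sum_(i < n) norm2v (v x i).

Definition psi_ (R : rcfType) (n m : nat) (c A : R) (v : BV n -> 'I_n -> 'cV[R]_m)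
  (x : BV n) : Hsp R n m :=
  (Num.sqrt (nu_ c A v x))^-1 *:
    (ket0 R n m + (Num.sqrt (c * A))^-1 *: \sum_(i < n) ketivb i (v x i) (x i)).
Definition phi_ (R : rcfType) (n m : nat) (c A : R) (v : BV n -> 'I_n -> 'cV[R]_m)
  (x : BV n) : Hsp R n m :=
  (Num.sqrt (mu_ c A v x))^-1 *:
    (ket0 R n m - Num.sqrt (c * A) *: \sum_(i < n) ketivb i (v x i) (~~ x i)).

Definition Cvec (R : rcfType) (n m kappa : nat) (X : {set BV n}) (f : BV n -> bool)
  (c A : R) (v : BV n -> 'I_n -> 'cV[R]_m) (alpha : 'I_kappa -> BV n -> R)
  (j : 'I_kappa) (i : 'I_n) (b : bool) : 'cV[R]_m :=
  \sum_(x in X | f x && (x i == b)) (alpha j x / Num.sqrt (nu_ c A v x)) *: v x i.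

Definition inV (R : rcfType) (n m kappa : nat) (X : {set BV n}) (f : BV n -> bool)
  (c A : R) (v : BV n -> 'I_n -> 'cV[R]_m) (alpha : 'I_kappa -> BV n -> R)
  (u : 'cV[R]_m) : Prop :=
  (exists j i b, u = Cvec X f c A v alpha j i b) \/
  (exists y i, [/\ y \in X, f y = false & u = v y i]).

(* Main.v *)
Require Import Defs.
From mathcomp Require Import all_boot all_order all_algebra.
From mathcomp Require Import ring lra.
Import Order.TTheory GRing.Theory Num.Theory.
Local Open Scope ring_scope.
Set Implicit Arguments. Unset Strict Implicit.

Section Gen.
Variables (R : rcfType) (n m N : nat).
Implicit Types (p q : Hsp R n m).

Lemma fst_sum I (r : seq I) (P : pred I) (F : I -> Hsp R n m) :
  (\sum_(i <- r | P i) F i).1 = \sum_(i <- r | P i) (F i).1.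
Proof. by elim/big_rec2: _ => //= i a b _ ->. Qed.

Lemma snd_sum I (r : seq I) (P : pred I) (F : I -> Hsp R n m) ib :
  (\sum_(i <- r | P i) F i).2 ib = \sum_(i <- r | P i) (F i).2 ib.
Proof. by elim/big_rec2: _ => [|i a b _ <-]; rewrite /= ffunE. Qed.

Lemma sndZ (a : R) p ib : (a *: p).2 ib = a *: p.2 ib.
Proof. by rewrite /= ffunE. Qed.
Lemma fstZ (a : R) p : (a *: p).1 = a * p.1.
Proof. by []. Qed.

Lemma dotvC (u w : 'cV[R]_m) : dotv u w = dotv w u.
Proof. by apply: eq_bigr => k _; rewrite mulrC. Qed.
Lemma dotvDr (u w w' : 'cV[R]_m) : dotv u (w + w') = dotv u w + dotv u w'.
Proof. by rewrite /dotv -big_split; apply: eq_bigr => k _; rewrite mxE mulrDr. Qed.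
Lemma dotvZr (a : R) (u w : 'cV[R]_m) : dotv u (a *: w) = a * dotv u w.
Proof. by rewrite /dotv mulr_sumr; apply: eq_bigr => k _; rewrite mxE mulrCA. Qed.
Lemma dotv0r (u : 'cV[R]_m) : dotv u 0 = 0.
Proof. by rewrite /dotv big1 // => k _; rewrite mxE mulr0. Qed.
Lemma dotv0l (u : 'cV[R]_m) : dotv 0 u = 0.
Proof. by rewrite dotvC dotv0r. Qed.
Lemma dotvZl (a : R) (u w : 'cV[R]_m) : dotv (a *: u) w = a * dotv u w.
Proof. by rewrite dotvC dotvZr dotvC. Qed.
Lemma dotvNr (u w : 'cV[R]_m) : dotv u (- w) = - dotv u w.
Proof. by rewrite -scaleN1r dotvZr mulN1r. Qed.
Lemma dotvBr (u w w' : 'cV[R]_m) : dotv u (w - w') = dotv u w - dotv u w'.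
Proof. by rewrite dotvDr dotvNr. Qed.
Lemma dotvBl (u w w' : 'cV[R]_m) : dotv (w - w') u = dotv w u - dotv w' u.
Proof. by rewrite dotvC dotvBr !(dotvC u). Qed.
Lemma norm2v_ge0 (u : 'cV[R]_m) : 0 <= norm2v u.
Proof. by apply: sumr_ge0 => k _; rewrite -expr2 sqr_ge0. Qed.
Lemma norm2v_eq0 (u : 'cV[R]_m) : norm2v u = 0 -> u = 0.
Proof.
move=> h; apply/matrixP => k l; rewrite ord1 mxE.
have := psumr_eq0P (P := predT) (fun i _ => sqr_ge0 (u i 0)).
rewrite /norm2v /dotv in h.
have h' : \sum_(i < m) u i 0 ^+ 2 = 0 by rewrite -[RHS]h; apply: eq_bigr => i _; rewrite expr2.
move/(_ h' k isT)/eqP; rewrite sqrf_eq0 => /eqP //.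
Qed.

Lemma hdotC p q : hdot p q = hdot q p.
Proof. by rewrite /hdot [p.1 * _]mulrC; congr (_ + _); apply: eq_bigr => ib _; rewrite dotvC. Qed.
Lemma hdotDr p q q' : hdot p (q + q') = hdot p q + hdot p q'.
Proof.
rewrite /hdot /= mulrDr addrACA -big_split /=; congr (_ + _).
by apply: eq_bigr => ib _; rewrite ffunE dotvDr.
Qed.
Lemma hdot0r p : hdot p 0 = 0.
Proof. by rewrite /hdot /= mulr0 add0r big1 // => ib _; rewrite ffunE dotv0r. Qed.
Lemma hdotZr (a : R) p q : hdot p (a *: q) = a * hdot p q.
Proof.
rewrite /hdot fstZ mulrDr mulrCA; congr (_ + _).
by rewrite mulr_sumr; apply: eq_bigr => ib _; rewrite sndZ dotvZr.
Qed.
Lemma hdotZl (a : R) p q : hdot (a *: p) q = a * hdot p q.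
Proof. by rewrite hdotC hdotZr hdotC. Qed.
Lemma hdot_sumr I (r : seq I) (P : pred I) (F : I -> Hsp R n m) p :
  hdot p (\sum_(i <- r | P i) F i) = \sum_(i <- r | P i) hdot p (F i).
Proof. by elim/big_rec2: _ => [|i a b _ <-]; rewrite ?hdot0r ?hdotDr. Qed.
Lemma hdot_suml I (r : seq I) (P : pred I) (F : I -> Hsp R n m) p :
  hdot (\sum_(i <- r | P i) F i) p = \sum_(i <- r | P i) hdot (F i) p.
Proof. by rewrite hdotC hdot_sumr; apply: eq_bigr => i _; rewrite hdotC. Qed.

Variable S : 'M[R]_(N, m).

Lemma TmapD p q : Tmap S (p + q) = Tmap S p + Tmap S q.
Proof. by rewrite /Tmap /=; congr pair; apply/ffunP => ib; rewrite !ffunE mulmxDr. Qed.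
Lemma Tmap0 : Tmap S (0 : Hsp R n m) = 0.
Proof. by rewrite /Tmap /=; congr pair; apply/ffunP => ib; rewrite !ffunE mulmx0. Qed.
Lemma TmapZ (a : R) p : Tmap S (a *: p) = a *: Tmap S p.
Proof. by rewrite /Tmap /=; congr pair; apply/ffunP => ib; rewrite !ffunE scalemxAr. Qed.
Lemma Tmap_sum I (r : seq I) (P : pred I) (F : I -> Hsp R n m) :
  Tmap S (\sum_(i <- r | P i) F i) = \sum_(i <- r | P i) Tmap S (F i).
Proof. by elim/big_rec2: _ => [|i a b _ <-]; rewrite ?Tmap0 ?TmapD. Qed.
Lemma Tmap1 p : (Tmap S p).1 = p.1. Proof. by []. Qed.
Lemma Tmap2 p ib : (Tmap S p).2 ib = S *m p.2 ib. Proof. by rewrite /= ffunE. Qed.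

End Gen.

Lemma hdot_scal (R : rcfType) (n m : nat) (p q : Hsp R n m) (a b : R) (P Q : 'I_n * bool -> 'cV[R]_m) :
  (forall ib, p.2 ib = a *: P ib) -> (forall ib, q.2 ib = b *: Q ib) ->
  hdot p q = p.1 * q.1 + a * b * \sum_ib dotv (P ib) (Q ib).
Proof.
move=> hp hq; rewrite /hdot mulr_sumr; congr (_ + _); apply: eq_bigr => ib _.
by rewrite hp hq dotvZl dotvZr mulrA.
Qed.



Section Gen2.
Variables (R : rcfType) (n m N : nat).
Implicit Types (p q : Hsp R n m).

Lemma ket_sum1 (u : 'I_n -> 'cV[R]_m) (g : 'I_n -> bool) :
  (\sum_i ketivb i (u i) (g i)).1 = 0.
Proof. by rewrite fst_sum big1. Qed.

Lemma ket_sum2 (u : 'I_n -> 'cV[R]_m) (g : 'I_n -> bool) ib :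
  (\sum_i ketivb i (u i) (g i)).2 ib = if g ib.1 == ib.2 then u ib.1 else 0.
Proof.
rewrite snd_sum (bigD1 ib.1) //= ffunE big1 => [|i /negbTE hi]; last first.
  by rewrite ffunE; case: ib hi => i0 b0 /= hi; rewrite xpair_eqE eq_sym hi.
case: ib => i0 b0 /=; rewrite xpair_eqE eqxx /= addr0.
by rewrite eq_sym.
Qed.

Lemma sum_ib_ind (h : 'I_n -> bool) (g : 'I_n -> bool -> R) :
  \sum_(ib : 'I_n * bool) (if h ib.1 == ib.2 then g ib.1 ib.2 else 0)
  = \sum_i g i (h i).
Proof.
rewrite -(pair_bigA _ (fun i b => if h i == b then g i b else 0)) /=.
by apply: eq_bigr => i _; rewrite big_bool; case: (h i) => /=; rewrite ?addr0 ?add0r.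
Qed.

Lemma hdotT_scal (S : 'M[R]_(N, m)) p q (a b : R) (P Q : 'I_n * bool -> 'cV[R]_m) :
  (forall ib, p.2 ib = a *: P ib) -> (forall ib, q.2 ib = b *: Q ib) ->
  hdot (Tmap S p) (Tmap S q) =
  p.1 * q.1 + a * b * \sum_ib dotv (S *m P ib) (S *m Q ib).
Proof.
move=> hp hq.
rewrite (@hdot_scal R n N (Tmap S p) (Tmap S q) a b (fun ib => S *m P ib) (fun ib => S *m Q ib)) //.
  by move=> ib; rewrite Tmap2 hp scalemxAr.
by move=> ib; rewrite Tmap2 hq scalemxAr.
Qed.

Variables (c A : R) (v : BV n -> 'I_n -> 'cV[R]_m).

Lemma psi1 x : (psi_ c A v x).1 = (Num.sqrt (nu_ c A v x))^-1.
Proof. by rewrite /psi_ fstZ /= ket_sum1 scaler0 addr0 mulr1. Qed.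

Lemma psi2 x ib : (psi_ c A v x).2 ib =
  ((Num.sqrt (nu_ c A v x))^-1 * (Num.sqrt (c * A))^-1) *:
     (if x ib.1 == ib.2 then v x ib.1 else 0).
Proof.
by rewrite /psi_ sndZ /= ffunE sndZ ket_sum2 ffunE add0r scalerA.
Qed.

Lemma phi1 x : (phi_ c A v x).1 = (Num.sqrt (mu_ c A v x))^-1.
Proof. by rewrite /phi_ fstZ /= ket_sum1 scaler0 subr0 mulr1. Qed.

Lemma phi2 x ib : (phi_ c A v x).2 ib =
  (- ((Num.sqrt (mu_ c A v x))^-1 * Num.sqrt (c * A))) *:
     (if ~~ x ib.1 == ib.2 then v x ib.1 else 0).
Proof.
rewrite /phi_ sndZ /= !ffunE ket_sum2 add0r.
by rewrite scalerN scalerA scaleNr.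
Qed.

End Gen2.

Lemma norm2vB (R : rcfType) m (u w : 'cV[R]_m) :
  norm2v (u - w) = norm2v u + norm2v w - 2 * dotv u w.
Proof.
rewrite /norm2v dotvBl !dotvBr (dotvC w u); ring.
Qed.
Lemma norm2vD (R : rcfType) m (u w : 'cV[R]_m) :
  norm2v (u + w) = norm2v u + norm2v w + 2 * dotv u w.
Proof.
rewrite /norm2v dotvDr (dotvC (u + w) u) (dotvC (u + w) w) !dotvDr (dotvC w u); ring.
Qed.

Lemma polar (R : rcfType) m N (S : 'M[R]_(N, m)) (eps : R) (u w : 'cV[R]_m) :
  0 < eps ->
  (1 - eps) * norm2v u <= norm2v (S *m u) <= (1 + eps) * norm2v u ->
  (1 - eps) * norm2v w <= norm2v (S *m w) <= (1 + eps) * norm2v w ->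
  (1 - eps) * norm2v (u - w) <= norm2v (S *m u - S *m w) <= (1 + eps) * norm2v (u - w) ->
  `|dotv (S *m u) (S *m w) - dotv u w| <= 2 * eps * (norm2v u + norm2v w).
Proof.
move=> he /andP[h1 h2] /andP[h3 h4] /andP[h5 h6].
rewrite !norm2vB in h5 h6.
have hp := norm2v_ge0 (u + w); rewrite norm2vD in hp.
have hm := norm2v_ge0 (u - w); rewrite norm2vB in hm.
have hu := norm2v_ge0 u; have hw := norm2v_ge0 w.
move: h1 h2 h3 h4 h5 h6 hp hm hu hw.
set a := norm2v u; set b := norm2v w; set d := dotv u w.
set a' := norm2v _; set b' := norm2v _; set d' := dotv _ _.
move=> h1 h2 h3 h4 h5 h6 hp hm hu hw.
rewrite ler_norml; apply/andP; split; nra.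
Qed.

Unset Implicit Arguments. Set Strict Implicit.

Lemma dotv_if (R : rcfType) m (b b' : bool) (u w : 'cV[R]_m) :
  dotv (if b then u else 0) (if b' then w else 0) = if b && b' then dotv u w else 0.
Proof. by case: b; case: b'; rewrite ?dotv0l ?dotv0r. Qed.

Lemma sqrt_near1 (R : rcfType) (h : R) : 0 <= h -> `|Num.sqrt h - 1| <= `|h - 1|.
Proof.
move=> h0; have q0 := sqrtr_ge0 h.
have -> : h - 1 = (Num.sqrt h - 1) * (Num.sqrt h + 1).
  by rewrite -subr_sqr sqr_sqrtr // expr1n.
rewrite normrM (ger0_norm (x := Num.sqrt h + 1)); last by lra.
apply: ler_peMr; [exact: normr_ge0| lra].
Qed.

Lemma hdot_lin (R : rcfType) n m k (b : 'I_k -> R) (F G : 'I_k -> Hsp R n m) :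
  hdot (\sum_j b j *: F j) (\sum_l b l *: G l) =
  \sum_j \sum_l b j * b l * hdot (F j) (G l).
Proof.
rewrite hdot_suml; apply: eq_bigr => j _; rewrite hdotZl hdot_sumr mulr_sumr.
by apply: eq_bigr => l _; rewrite hdotZr !mulrA.
Qed.

Theorem lemma12 (R : rcfType) (n m N : nat) (X : {set BV n}) (f : BV n -> bool)
  (c : R) (v : BV n -> 'I_n -> 'cV[R]_m) (kappa : nat)
  (zeta : 'I_kappa -> Hsp R n m) (alpha : 'I_kappa -> BV n -> R)
  (eps : R) (S : 'M[R]_(N, m)) :
  0 < c ->
  deciding X f v ->
  let A := sizeA X v in
  let psi := psi_ c A v in
  let phi := phi_ c A v in
  (* {zeta_j} is an orthonormal basis of span{psi_x : f(x) = 1} *)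
  (forall j l : 'I_kappa, hdot (zeta j) (zeta l) = (j == l)%:R) ->
  (forall j, zeta j = \sum_(x in X | f x) alpha j x *: psi x) ->
  (forall x, x \in X -> f x ->
     exists beta : 'I_kappa -> R, psi x = \sum_(j < kappa) beta j *: zeta j) ->
  0 < eps ->
  (* S is a JL compression of V u {0} *)
  (forall u w : 'cV[R]_m,
     (inV X f c A v alpha u \/ u = 0) -> (inV X f c A v alpha w \/ w = 0) ->
     (1 - eps) * norm2v (u - w) <= norm2v (S *m u - S *m w) /\
     norm2v (S *m u - S *m w) <= (1 + eps) * norm2v (u - w)) ->
  let T := Tmap S in
  [/\ (forall j l : 'I_kappa,
         `|hdot (T (zeta j)) (T (zeta l)) - (j == l)%:R| <= 4 * eps),
      (forall j x, x \in X -> f x = false ->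
         `|hdot (T (zeta j)) (T (phi x))| <= 2 * eps * (c + 1) * A),
      (forall x, x \in X -> f x ->
         `|hnorm2 (T (psi x)) - 1| <= 4 * eps * kappa%:R) &
      (forall x, x \in X -> f x = false ->
         `|Num.sqrt (hnorm2 (T (phi x))) - 1| <= 3 * eps)].
Proof.
move=> hc hdec A psi phi horth hz hbeta he hJL T.
have A0 : 0 <= A.
  rewrite /A /sizeA; apply: (big_ind (fun y => 0 <= y)) => //.
    by move=> a b ha hb; rewrite le_max ha.
  by move=> x _; apply: sumr_ge0 => i _; exact: norm2v_ge0.
have Ax : forall x, x \in X -> \sum_(i < n) norm2v (v x i) <= A.
  move=> x hx; rewrite /A /sizeA.
  exact: (le_bigmax_cond 0 (fun x => \sum_(i < n) norm2v (v x i)) hx).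
pose cA := c * A.
have cA0 : 0 <= cA by rewrite mulr_ge0 // ltW.
pose t := Num.sqrt cA. pose s := t^-1.
have t0 : 0 <= t := sqrtr_ge0 _.
have t2 : t ^+ 2 = cA := sqr_sqrtr cA0.
have s0 : 0 <= s by rewrite invr_ge0.
have s2 : s ^+ 2 = cA^-1 by rewrite exprVn t2.
have st1 : s * t <= 1.
  case: (eqVneq t 0) => [->|tn0]; first by rewrite mulr0.
  by rewrite mulVf.
have stC : forall z, 0 <= z -> s * s * z <= 1 -> s * t * z <= cA.
  move=> z z0 hz1; case: (eqVneq t 0) => [t00|tn0].
    by rewrite t00 mulr0 mul0r.
  rewrite mulVf // mul1r -t2.
  have -> : z = t ^+ 2 * (s * s * z) by rewrite /s; field.
  by rewrite ler_piMr // exprn_ge0.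
pose rn x := (Num.sqrt (nu_ c A v x))^-1.
pose rm x := (Num.sqrt (mu_ c A v x))^-1.
pose P (x : BV n) (ib : 'I_n * bool) := if x ib.1 == ib.2 then v x ib.1 else 0.
pose Q (x : BV n) (ib : 'I_n * bool) := if ~~ x ib.1 == ib.2 then v x ib.1 else 0.
pose aj j := \sum_(y in X | f y) alpha j y * rn y.
pose Cj j (ib : 'I_n * bool) := Cvec X f c A v alpha j ib.1 ib.2.
have Hp1 x : (psi x).1 = rn x by exact: psi1.
have Hp2 x ib : (psi x).2 ib = (rn x * s) *: P x ib by exact: psi2.
have Hf1 x : (phi x).1 = rm x by exact: phi1.
have Hf2 x ib : (phi x).2 ib = (- (rm x * t)) *: Q x ib by exact: phi2.
have Hz1 j : (zeta j).1 = aj j.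
  by rewrite hz fst_sum; apply: eq_bigr => y _; rewrite fstZ Hp1.
have Hz2 j ib : (zeta j).2 ib = s *: Cj j ib.
  case: ib => i b; rewrite hz snd_sum /Cj /Cvec scaler_sumr.
  rewrite big_mkcond [RHS]big_mkcond; apply: eq_bigr => y _.
  rewrite fun_if sndZ Hp2 /P /=.
  case: (y \in X) => //=; case: (f y) => //=; case: (y i == b) => /=;
    rewrite ?scaler0 // !scalerA; congr (_ *: _); rewrite /rn; ring.
have Hnu x : hnorm2 (psi x) = 1.
  rewrite /hnorm2 (hdot_scal (Hp2 x) (Hp2 x)) Hp1.
  rewrite (eq_bigr (fun ib => if x ib.1 == ib.2 then norm2v (v x ib.1) else 0));
    last by move=> ib _; rewrite /P dotv_if andbb.
  rewrite (sum_ib_ind x (fun i _ => norm2v (v x i))).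
  have nu1 : 1 <= nu_ c A v x.
    rewrite /nu_ lerDl mulr_ge0 ?invr_ge0 //; apply: sumr_ge0 => i _; exact: norm2v_ge0.
  have rn2 : rn x * rn x = (nu_ c A v x)^-1.
    by rewrite /rn -expr2 exprVn sqr_sqrtr // (le_trans _ nu1).
  have ss : s * s = cA^-1 by rewrite -expr2.
  rewrite -(@mulVf _ (nu_ c A v x)); last by apply/eqP => h; rewrite h in nu1; lra.
  rewrite -rn2 /nu_ -/cA -ss; ring.
have JL1 u : (inV X f c A v alpha u \/ u = 0) ->
    (1 - eps) * norm2v u <= norm2v (S *m u) <= (1 + eps) * norm2v u.
  move=> hu; have [h1 h2] := hJL u 0 hu (or_intror erefl).
  by rewrite mulmx0 !subr0 in h1 h2; rewrite h1 h2.
have JLd u w : (inV X f c A v alpha u \/ u = 0) -> (inV X f c A v alpha w \/ w = 0) ->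
    `|dotv (S *m u) (S *m w) - dotv u w| <= 2 * eps * (norm2v u + norm2v w).
  move=> hu hw; apply: polar => //; [exact: JL1| exact: JL1|].
  by have [h1 h2] := hJL u w hu hw; rewrite h1 h2.
have VC j ib : inV X f c A v alpha (Cj j ib) \/ Cj j ib = 0.
  by left; left; exists j, ib.1, ib.2.
have VQ x ib : x \in X -> f x = false -> inV X f c A v alpha (Q x ib) \/ Q x ib = 0.
  move=> hx hfx; rewrite /Q; case: ifP => _; last by right.
  by left; right; exists x, ib.1.
have Nj j : s * s * \sum_ib norm2v (Cj j ib) <= 1.
  have := horth j j; rewrite (hdot_scal (Hz2 j) (Hz2 j)) Hz1 eqxx => h.
  by rewrite -[1]/(true%:R : R) -h lerDr -expr2 sqr_ge0.
have Nj0 j : 0 <= \sum_ib norm2v (Cj j ib).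
  by apply: sumr_ge0 => ib _; exact: norm2v_ge0.
have part1 : forall j l : 'I_kappa,
    `|hdot (T (zeta j)) (T (zeta l)) - (j == l)%:R| <= 4 * eps.
  move=> j l; rewrite -horth (hdotT_scal S (Hz2 j) (Hz2 l)) (hdot_scal (Hz2 j) (Hz2 l)).
  rewrite opprD addrACA subrr add0r -mulrBr -sumrB normrM.
  rewrite ger0_norm ?mulr_ge0 //.
  apply: (le_trans (ler_wpM2l (mulr_ge0 s0 s0) (ler_norm_sum _ _ _))).
  apply: (le_trans (ler_wpM2l (mulr_ge0 s0 s0) (ler_sum _ (fun ib _ => JLd _ _ (VC j ib) (VC l ib))))).
  rewrite -mulr_sumr big_split /=.
  have := Nj j; have := Nj l; have := Nj0 j; have := Nj0 l.
  set a := \sum_ib norm2v (Cj j ib); set b := \sum_ib norm2v (Cj l ib).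
  move=> *; nra.
have mu1 x : 1 <= mu_ c A v x.
  rewrite /mu_ lerDl mulr_ge0 //; apply: sumr_ge0 => i _; exact: norm2v_ge0.
have sqmu x : 1 <= Num.sqrt (mu_ c A v x) by rewrite -sqrtr1 ler_sqrt // (le_trans _ (mu1 x)).
have rm0 x : 0 <= rm x by rewrite invr_ge0 sqrtr_ge0.
have rmle1 x : rm x <= 1 by rewrite invf_le1 // (lt_le_trans _ (sqmu x)).
have rm2 x : rm x * rm x = (mu_ c A v x)^-1.
  by rewrite /rm -expr2 exprVn sqr_sqrtr // (le_trans _ (mu1 x)).
have nQ x : \sum_ib norm2v (Q x ib) = \sum_i norm2v (v x i).
  rewrite (eq_bigr (fun ib => if (~~ x ib.1) == ib.2 then norm2v (v x ib.1) else 0));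
    last by move=> ib _; rewrite /Q /norm2v dotv_if andbb.
  exact: (sum_ib_ind (fun i => ~~ x i) (fun i _ => norm2v (v x i))).
have PsiPhi y x : y \in X -> f y -> x \in X -> f x = false -> hdot (psi y) (phi x) = 0.
  move=> hy hfy hx hfx.
  rewrite (hdot_scal (Hp2 y) (Hf2 x)) Hp1 Hf1.
  rewrite (eq_bigr (fun ib => if y ib.1 == ib.2 then
       (if ~~ x ib.1 == ib.2 then dotv (v y ib.1) (v x ib.1) else 0) else 0)); last first.
    by move=> [i b] _; rewrite /P /Q dotv_if /=; case: (y i == b).
  rewrite (sum_ib_ind y (fun i b => if ~~ x i == b then dotv (v y i) (v x i) else 0)).
  have hfyx : f y != f x by rewrite hfx hfy.
  have hd := hdec y x hy hx hfyx.
  have -> : \sum_i (if ~~ x i == y i then dotv (v y i) (v x i) else 0) = 1.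
    rewrite -hd [RHS]big_mkcond; apply: eq_bigr => i _.
    by case: (x i); case: (y i).
  have tn0 : t != 0.
    rewrite /t sqrtr_eq0 -ltNge /cA pmulr_rgt0 //.
    rewrite lt_def A0 andbT; apply/eqP => A00.
    suff : \sum_(i < n | y i != x i) dotv (v y i) (v x i) = 0.
      by rewrite hd => /eqP; rewrite oner_eq0.
    apply: big1 => i _.
    have : norm2v (v y i) = 0.
      have := Ax y hy; rewrite A00 (bigD1 i) //= => hle.
      have hr : 0 <= \sum_(k < n | k != i) norm2v (v y k).
        by apply: sumr_ge0 => k _; exact: norm2v_ge0.
      have := norm2v_ge0 (v y i); lra.
    by move/norm2v_eq0 => ->; rewrite dotv0l.
  have st : s * t = 1 by rewrite mulVf.
  have -> : rn y * rm x + rn y * s * - (rm x * t) * 1 = rn y * rm x * (1 - s * t) by ring.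
  by rewrite st subrr mulr0.
have Zphi j x : x \in X -> f x = false -> hdot (zeta j) (phi x) = 0.
  move=> hx hfx; rewrite hz hdot_suml big1 // => y /andP [hy hfy].
  by rewrite hdotZl PsiPhi ?mulr0.
have eqn : forall a b : R, b = 0 -> `|a| = `|a - b| by move=> a b ->; rewrite subr0.
have part2 : forall j x, x \in X -> f x = false ->
    `|hdot (T (zeta j)) (T (phi x))| <= 2 * eps * (c + 1) * A.
  move=> j x hx hfx.
  have E0 := Zphi j x hx hfx; rewrite (hdot_scal (Hz2 j) (Hf2 x)) Hz1 Hf1 in E0.
  rewrite (hdotT_scal S (Hz2 j) (Hf2 x)) Hz1 Hf1 (eqn _ _ E0).
  rewrite opprD addrACA subrr add0r -mulrBr -sumrB normrM.
  have -> : `|s * - (rm x * t)| = s * t * rm x.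
    by rewrite mulrN normrN ger0_norm ?mulr_ge0 // (mulrC (rm x)) mulrA.
  apply: (le_trans (ler_wpM2l (mulr_ge0 (mulr_ge0 s0 t0) (rm0 x)) (ler_norm_sum _ _ _))).
  apply: (le_trans (ler_wpM2l (mulr_ge0 (mulr_ge0 s0 t0) (rm0 x))
      (ler_sum _ (fun ib _ => JLd _ _ (VC j ib) (VQ x ib hx hfx))))).
  rewrite -mulr_sumr big_split /= nQ.
  have h1 := stC _ (Nj0 j) (Nj j).
  have h2 := Ax x hx.
  have h3 : 0 <= \sum_i norm2v (v x i) by apply: sumr_ge0 => i _; exact: norm2v_ge0.
  have h4 := rm0 x; have h5 := rmle1 x.
  have h6 : 0 <= s * t by rewrite mulr_ge0.
  move: h1 h2 h3 h4 h5 h6 st1.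
  set a := \sum_ib norm2v (Cj j ib); set b := \sum_i norm2v (v x i).
  set st := s * t; set r := rm x.
  move=> h1 h2 h3 h4 h5 h6 h7.
  have hst : st * b <= A by nra.
  have hA : st * a + st * b <= cA + A by lra.
  have : r * (st * a + st * b) <= cA + A by nra.
  rewrite /cA; nra.
have eqn2 : forall a b c : R, b = c -> `|a - c| = `|a - b| by move=> a b d ->.
have part3 : forall x, x \in X -> f x ->
    `|hnorm2 (T (psi x)) - 1| <= 4 * eps * kappa%:R.
  move=> x hx hfx; have [beta hb] := hbeta x hx hfx.
  have Hn := Hnu x; rewrite /hnorm2 hb hdot_lin in Hn.
  have Hn' : \sum_j \sum_l beta j * beta l * (j == l)%:R = 1.
    by rewrite -[RHS]Hn; apply: eq_bigr => j _; apply: eq_bigr => l _; rewrite horth.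
  rewrite /hnorm2 /T hb Tmap_sum.
  under eq_bigr do rewrite TmapZ.
  rewrite hdot_lin (eqn2 _ _ _ Hn') -sumrB.
  under eq_bigr do rewrite -sumrB.
  have Hsq : \sum_j beta j ^+ 2 = 1.
    rewrite -[RHS]Hn'; apply: eq_bigr => j _; rewrite (bigD1 j) //= eqxx mulr1n mulr1.
    rewrite big1 ?addr0 ?expr2 // => l hl.
    by rewrite eq_sym (negbTE hl) mulr0n mulr0.
  apply: (le_trans (ler_norm_sum _ _ _)).
  apply: (le_trans (ler_sum _ (fun j _ => ler_norm_sum _ _ _))).
  apply: (@le_trans _ _ (\sum_j \sum_l 2 * eps * (beta j ^+ 2 + beta l ^+ 2))).
    apply: ler_sum => j _; apply: ler_sum => l _.
    rewrite -mulrBr normrM.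
    have hb2 : `|beta j * beta l| <= (beta j ^+ 2 + beta l ^+ 2) / 2.
      have := sqr_ge0 (beta j - beta l); have := sqr_ge0 (beta j + beta l).
      rewrite !sqrrD !sqrrN => *.
      rewrite ler_norml; apply/andP; split; lra.
    have := part1 j l; have := normr_ge0 (beta j * beta l).
    have := normr_ge0 (hdot (Tmap S (zeta j)) (Tmap S (zeta l)) - (j == l)%:R).
    move: hb2; rewrite /T.
    set p := `|beta j * beta l|; set q := `|_ - _|; move=> *; nra.
  have inner : forall j, \sum_l 2 * eps * (beta j ^+ 2 + beta l ^+ 2)
      = 2 * eps * (beta j ^+ 2 * kappa%:R + 1).
    by move=> j; rewrite -mulr_sumr big_split /= sumr_const card_ord Hsq mulr_natr.
  rewrite (eq_bigr _ (fun j _ => inner j)) -mulr_sumr big_split /= sumr_const card_ord.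
  rewrite -mulr_suml Hsq -mulr_natr; lra.
have part4 : forall x, x \in X -> f x = false ->
    `|Num.sqrt (hnorm2 (T (phi x))) - 1| <= 3 * eps.
  move=> x hx hfx.
  rewrite /hnorm2 /T (hdotT_scal S (Hf2 x) (Hf2 x)) Hf1.
  rewrite (eq_bigr (fun ib => if ~~ x ib.1 == ib.2 then norm2v (S *m v x ib.1) else 0));
    last by move=> ib _; rewrite /Q; case: ifP; rewrite ?mulmx0 ?dotv0l.
  rewrite (sum_ib_ind (fun i => ~~ x i) (fun i _ => norm2v (S *m v x i))).
  have hV i : inV X f c A v alpha (v x i) \/ v x i = 0 by left; right; exists x, i.
  have hlo : (1 - eps) * \sum_i norm2v (v x i) <= \sum_i norm2v (S *m v x i).
    rewrite mulr_sumr; apply: ler_sum => i _; by have /andP[] := JL1 _ (hV i).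
  have hhi : \sum_i norm2v (S *m v x i) <= (1 + eps) * \sum_i norm2v (v x i).
    rewrite mulr_sumr; apply: ler_sum => i _; by have /andP[] := JL1 _ (hV i).
  have hP0 : 0 <= \sum_i norm2v (v x i) by apply: sumr_ge0 => i _; exact: norm2v_ge0.
  have hzz := rm2 x; have hmu := mu1 x.
  have zmu : rm x * rm x * mu_ c A v x = 1.
    by rewrite hzz mulVf //; apply/eqP => h; rewrite h in hmu; lra.
  move: zmu; rewrite /mu_ -/cA.
  have ht : - (rm x * t) * - (rm x * t) = rm x * rm x * cA.
    by rewrite mulrNN -t2; ring.
  rewrite ht.
  have z0 : 0 <= rm x * rm x by rewrite mulr_ge0.
  move: z0 hlo hhi hP0.
  set z := rm x * rm x; set Pn := \sum_i norm2v (v x i); set P' := \sum_i _.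
  move=> z0 hlo hhi hP0 zmu.
  have zc0 : 0 <= z * cA by rewrite mulr_ge0.
  have h1 : z * cA * (P' - Pn) <= z * cA * (eps * Pn) by rewrite ler_wpM2l //; lra.
  have h2 : z * cA * (- (eps * Pn)) <= z * cA * (P' - Pn) by rewrite ler_wpM2l //; lra.
  have h3 : 0 <= z * cA * Pn by rewrite mulr_ge0.
  have hh : 0 <= z + z * cA * P'.
    have : 0 <= P' by apply: sumr_ge0 => i _; exact: norm2v_ge0.
    by move=> ?; apply: addr_ge0 => //; rewrite mulr_ge0.
  have zmu' : z + z * cA * Pn = 1 by rewrite -[RHS]zmu; ring.
  have h4 : z * cA * Pn <= 1 by lra.
  have h5 : eps * (z * cA * Pn) <= eps * 1 by rewrite ler_wpM2l // ltW.
  have e1 : `|z + z * cA * P' - 1| <= eps.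
    rewrite ler_norml; apply/andP; split; lra.
  apply: (le_trans (@sqrt_near1 _ _ hh)); lra.
split => //.
Qed.
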